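(* Let $\lambda\in\mathbb Z^n\setminus\{0\}$ have coprime coefficients and let $\{\gamma_1,\dots,\gamma_{n-1}\}\subseteq\mathcal N(\lambda)$ be linearly independent in $\mathbb Q^n$. If $\alpha,\beta\in\mathbb N_0^n$ satisfy $[\mathbf X^\alpha-\mathbf X^\beta](\gamma_i)=0$ for each $i=1,\dots,n-1$, then $\mathbf X^{\lambda^+}-\mathbf X^{\lambda^-}$ divides $\mathbf X^\alpha-\mathbf X^\beta$ in $\mathbb Z[X_1,\dots,X_n]$.
   Context: For $\alpha\in\mathbb N_0^n$, $\mathbf X^\alpha=\prod_iX_i^{(\alpha)_i}$. For $\gamma\in\mathbb Z^n$ and a polynomial $p$, $p(\gamma)\in\mathbb Q(x)$ is the image of $p$ under $X_i\mapsto x^{(\gamma)_i}$. $\lambda^+,\lambda^-\in\mathbb N_0^n$ are the unique vectors with $\lambda=\lambda^+-\lambda^-$, $\lambda^+\cdot\lambda^-=0$. Coprime coefficients: gcd of coordinates equals $1$. $\mathcal N(\lambda)=\{\alpha\in\mathbb Z^n:\lambda\cdot\alpha=0\}$. *)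

(* Defs.v *)
From HB Require Import structures.
From mathcomp Require Import all_boot all_order all_algebra fraction.
Set Implicit Arguments. Unset Strict Implicit. Unset Printing Implicit Defensive.
Import Order.TTheory GRing.Theory Num.Theory.
Local Open Scope ring_scope.

(* Z[X_0, ..., X_{n-1}] as the iterated polynomial ring:
   mpoly 0 = Z, mpoly (m+1) = (mpoly m)[X_m]. *)
Fixpoint mpoly (n : nat) : idomainType :=
  match n with
  | 0 => int
  | m.+1 => {poly (mpoly m)}
  end.

(* the variable X_i in mpoly n (meaningful for i < n) *)
Fixpoint mvar (n i : nat) : mpoly n :=
  match n return mpoly n with
  | 0 => 0
  | m.+1 => if i == m then 'X else (mvar m i)%:P
  end.

Definition mono (n : nat) (a : 'I_n -> nat) : mpoly n :=
  \prod_(i < n) mvar n i ^+ a i.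

Fixpoint meval (K : fieldType) (v : nat -> K) (n : nat) : mpoly n -> K :=
  match n return mpoly n -> K with
  | 0 => fun c => c%:~R
  | m.+1 => fun p => (map_poly (@meval K v m) p).[v m]
  end.

Definition Qx : fieldType := {fraction {poly rat}}.
Definition xQ : Qx := @FracField.tofrac _ ('X : {poly rat}).

Definition gpt (n : nat) (g : 'I_n -> int) : nat -> Qx :=
  fun k => if (insub k : option 'I_n) is Some i then xQ ^ (g i) else 1.

Definition peval (n : nat) (p : mpoly n) (g : 'I_n -> int) : Qx :=
  meval (gpt g) p.

Definition posp (n : nat) (l : 'I_n -> int) : 'I_n -> nat :=
  fun i => if 0 <= l i then `|l i|%N else 0%N.
Definition negp (n : nat) (l : 'I_n -> int) : 'I_n -> nat :=
  fun i => if l i < 0 then `|l i|%N else 0%N.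

Definition coprime_coeffs (n : nat) (l : 'I_n -> int) : Prop :=
  (\big[gcdn/0%N]_(i < n) `|l i|%N = 1)%N.

Definition inN (n : nat) (l g : 'I_n -> int) : Prop :=
  \sum_(i < n) l i * g i = 0.

(* Main.v *)
Require Import Defs.
From HB Require Import structures.
From mathcomp Require Import all_boot all_order all_algebra fraction zify.
Import Order.TTheory GRing.Theory Num.Theory.
Local Open Scope ring_scope.

Lemma meval_rm (K : fieldType) (v : nat -> K) (n : nat) :
  {f : {rmorphism mpoly n -> K} | meval v (n:=n) =1 f}.
Proof.
elim: n => [|m [f Hf]]; first by exists (intr : {rmorphism int -> K}).
have cf : commr_rmorph f (v m) by move=> a; exact: mulrC.
exists (horner_morph cf) => p /=.
by rewrite /horner_morph (eq_map_poly Hf).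
Qed.

Lemma meval_var (K : fieldType) (v : nat -> K) (n i : nat) :
  (i < n)%N -> meval v (mvar n i) = v i.
Proof.
elim: n => [//|m IH] lt /=.
have [f Hf] := meval_rm _ v m.
rewrite (eq_map_poly Hf).
case: eqP => [->|ne]; first by rewrite map_polyX hornerX.
rewrite map_polyC hornerC -IH; first by symmetry; exact: Hf.
by rewrite ltnS leq_eqVlt in lt; case/orP: lt => // /eqP.
Qed.

Lemma xQ_neq0 : xQ != 0.
Proof. by rewrite /xQ tofrac_eq0 polyX_eq0. Qed.

Lemma peval_mono n (a : 'I_n -> nat) (g : 'I_n -> int) :
  peval (mono a) g = xQ ^ (\sum_(i < n) (a i)%:Z * g i).
Proof.
rewrite /peval; have [f Hf] := meval_rm _ (gpt g) n.
rewrite Hf /mono rmorph_prod.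
apply: (big_rec2 (fun x y => x = xQ ^ y)) => // i y1 y2 _ ->.
rewrite expfzDr ?xQ_neq0 // rmorphXn -Hf meval_var //.
rewrite /gpt valK.
by rewrite [(a i : int) * _]mulrC -exprz_exp.
Qed.

Lemma xQ_exp1 (z : int) : xQ ^ z = 1 -> z = 0.
Proof.
have H k : xQ ^+ k = 1 -> k = 0%N.
  rewrite /xQ -tofracXn -tofrac1 => /eqP; rewrite tofrac_eq => /eqP H.
  by have := congr1 (fun p : {poly rat} => size p) H; rewrite size_polyXn size_poly1 => -[].
case: z => k; first by move=> /H ->.
by rewrite NegzE -exprnN => /(congr1 GRing.inv); rewrite invrK invr1 => /H.
Qed.

Lemma peval_sub n (p q : mpoly n) g : peval (p - q) g = peval p g - peval q g.
Proof.
rewrite /peval; have [f Hf] := meval_rm _ (gpt g) n.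
by rewrite !Hf rmorphB.
Qed.

Lemma exp_eq n (a b : 'I_n -> nat) (g : 'I_n -> int) :
  peval (mono a - mono b) g = 0 ->
  \sum_(i < n) ((a i)%:Z - (b i)%:Z) * g i = 0.
Proof.
rewrite peval_sub !peval_mono => /eqP; rewrite subr_eq0 => /eqP E.
apply: xQ_exp1.
under eq_bigr do rewrite mulrBl.
rewrite sumrB expfzDr ?xQ_neq0 // E -expfzDr ?xQ_neq0 //.
by rewrite subrr.
Qed.

Lemma row_ker n m (G : 'M[int]_(m, n)) (x : 'I_n -> int) :
  (forall j, \sum_i x i * G j i = 0) ->
  (\row_i ((x i)%:~R : rat) *m (map_mx intr G)^T = 0).
Proof.
move=> H; apply/matrixP => i j; rewrite !mxE.
transitivity ((\sum_k x k * G j k)%:~R : rat); last by rewrite H.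
rewrite rmorph_sum; apply: eq_bigr => k _.
by rewrite !mxE rmorphM.
Qed.

Lemma kernel_line n (G : 'M[int]_(n.-1, n)) (lam d : 'I_n -> int) :
 (exists i, lam i != 0) ->
 row_free (map_mx intr G : 'M[rat]_(n.-1,n)) ->
 (forall j, \sum_i lam i * G j i = 0) ->
 (forall j, \sum_i d i * G j i = 0) ->
 exists a : rat, forall i, (d i)%:~R = a * (lam i)%:~R.
Proof.
move=> [i0 Hi0] rf Hl Hd.
pose Gq : 'M[rat]_(n.-1,n) := map_mx intr G.
set lq := \row_i ((lam i)%:~R : rat).
set dq := \row_i ((d i)%:~R : rat).
have n0 : (0 < n)%N := leq_ltn_trans (leq0n i0) (ltn_ord i0).
have lK : (lq <= kermx Gq^T)%MS by apply/sub_kermxP; exact: row_ker.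
have dK : (dq <= kermx Gq^T)%MS by apply/sub_kermxP; exact: row_ker.
have rk : \rank (kermx Gq^T) = 1%N.
  rewrite mxrank_ker mxrank_tr (eqP rf); move: n0; clear; lia.
have rl : \rank lq = 1%N.
  rewrite rank_rV; apply/eqP; rewrite eqb1; apply/eqP => /matrixP /(_ 0 i0).
  by rewrite !mxE => /eqP; rewrite intr_eq0 (negbTE Hi0).
have Kl : (kermx Gq^T <= lq)%MS.
  by have := mxrank_leqif_sup lK; rewrite rk rl => -[_ <-].
have /submxP [D ED] := submx_trans dK Kl.
exists (D 0 0) => i.
have := congr1 (fun M : 'M_(1, n) => M 0 i) ED => /=.
by rewrite !mxE big_ord1 !mxE.
Qed.

Lemma dvd_biggcd n (F : 'I_n -> nat) d :
  (forall i, d %| F i)%N -> (d %| \big[gcdn/0%N]_(i < n) F i)%N.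
Proof.
move=> H; apply: (big_ind (fun x => d %| x)%N) => //.
by move=> x y hx hy; rewrite dvdn_gcd hx hy.
Qed.

Lemma rat_int n (lam d : 'I_n -> int) (a : rat) :
  coprime_coeffs lam -> (forall i, (d i)%:~R = a * (lam i)%:~R) ->
  exists k : int, forall i, d i = k * lam i.
Proof.
move=> cop H.
have E i : denq a * d i = numq a * lam i.
  apply: (@intr_inj rat); rewrite !intrM H.
  rewrite mulrA; congr (_ * _).
  rewrite -[X in _ * X = _](divq_num_den a) mulrCA divff ?mulr1 //.
  by rewrite intr_eq0 denq_neq0.
have Dd i : (`|denq a| %| `|lam i|)%N.
  rewrite -(Gauss_dvdr _ (_ : coprime `|denq a| `|numq a|)); last by rewrite coprime_sym coprime_num_den.
  by rewrite -abszM -E abszM dvdn_mulr.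
have D1 : `|denq a|%N = 1%N.
  by apply/eqP; rewrite -dvdn1 -cop; exact: dvd_biggcd.
have D1' : denq a = 1.
  by have := denq_gt0 a; case: (denq a) D1 => // k /= ->.
exists (numq a) => i; have := E i; by rewrite D1' mul1r.
Qed.

Lemma mono_split n (a m u : 'I_n -> nat) (k : nat) :
  (forall i, a i = m i + k * u i)%N -> mono a = mono m * mono u ^+ k.
Proof.
move=> H; rewrite /mono -prodrXl -big_split; apply: eq_bigr => i _.
by rewrite H exprD mulnC exprM.
Qed.

Lemma div_poly n (lam : 'I_n -> int) (a b : 'I_n -> nat) (k : int) :
  (forall i, (a i)%:Z - (b i)%:Z = k * lam i) ->
  exists q : mpoly n, mono a - mono b = q * (mono (posp lam) - mono (negp lam)).
Proof.
move=> H; pose m i := minn (a i) (b i).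
case: (leP 0 k) => hk.
- have [k' Ek] : exists k' : nat, k = k'%:Z by exists `|k|%N; lia.
  subst k.
  have Ea i : (a i = m i + k' * posp lam i)%N.
    have := H i; rewrite /m /posp; case: (leP 0 (lam i)) => *; lia.
  have Eb i : (b i = m i + k' * negp lam i)%N.
    have := H i; rewrite /m /negp; case: (ltP (lam i) 0) => *; nia.
  rewrite (@mono_split _ _ _ _ _ Ea) (@mono_split _ _ _ _ _ Eb) -mulrBr subrXX.
  exists (mono m * \sum_(i < k') mono (posp lam) ^+ (k'.-1 - i) * mono (negp lam) ^+ i).
  by rewrite -mulrA [X in _ * X]mulrC.
- pose k' := `|k|%N.
  have Ea i : (a i = m i + k' * negp lam i)%N.
    have := H i; rewrite /m /negp /k'; case: (ltP (lam i) 0) => *; nia.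
  have Eb i : (b i = m i + k' * posp lam i)%N.
    have := H i; rewrite /m /posp /k'; case: (leP 0 (lam i)) => *; nia.
  rewrite (@mono_split _ _ _ _ _ Ea) (@mono_split _ _ _ _ _ Eb) -mulrBr subrXX.
  exists (- (mono m * \sum_(i < k') mono (negp lam) ^+ (k'.-1 - i) * mono (posp lam) ^+ i)).
  by rewrite mulNr -mulrN opprB -mulrA [X in _ * X]mulrC.
Qed.

Theorem lemma3p5 (n : nat) (lam : 'I_n -> int) (G : 'M[int]_(n.-1, n))
  (alpha beta : 'I_n -> nat) :
  (exists i, lam i != 0) ->
  coprime_coeffs lam ->
  (forall j : 'I_n.-1, inN lam (fun i => G j i)) ->
  row_free (map_mx (intr : int -> rat) G) ->
  (forall j : 'I_n.-1, peval (mono alpha - mono beta) (fun i => G j i) = 0) ->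
  exists q : mpoly n,
    mono alpha - mono beta = q * (mono (posp lam) - mono (negp lam)).
Proof.
move=> hl cop hN rf hev.
have hd j : \sum_i ((alpha i)%:Z - (beta i)%:Z) * G j i = 0 by apply: (@exp_eq _ _ _ (fun i => G j i)); exact: hev.
have [a Ha] := @kernel_line _ G lam (fun i => (alpha i)%:Z - (beta i)%:Z) hl rf hN hd.
have [k Hk] := @rat_int _ lam _ a cop Ha.
exact: (@div_poly _ lam alpha beta k Hk).
Qed.
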